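(* Let $G=(V,E)$ be a graph with a partition of its vertex set into sets $V_1,\dots,V_t$ ($t$ a positive integer), each $V_i$ being a set of pairwise true twins. Let $m_i=|V_i|$ for $1\le i\le t$. Let $\Gamma$ be a finite Abelian group of order $m$ with $\sum_{i=1}^t m_i=m-1$. If $\Gamma^*$ can be partitioned into pairwise disjoint sets $S_1,\dots,S_t$ with $|S_i|=m_i$ and $\sum_{s\in S_i}s=0$ for every $i$, then $G$ has a $\Gamma^*$-distance anti-magic labeling.
   Context: $\Gamma^*=\Gamma\setminus\{0\}$. In a graph $G=(V,E)$, a set $M\subseteq V$ is a module if $N(x)\setminus M=N(y)\setminus M$ for all $x,y\in M$. Two vertices $x,y$ are twins if $\{x,y\}$ is a module; they are false twins if moreover $\{x,y\}\notin E$ and true twins if $\{x,y\}\in E$ (every vertex is considered a false and true twin of itself). A $\Gamma^*$-distance anti-magic labeling of $G$ (with $|V|=|\Gamma|-1$) is a bijection $\ell\colon V\to\Gamma^*$ such that the weights $w(v)=\sum_{u\in N(v)}\ell(u)$, $v\in V$, are pairwise distinct. *)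

(* Defs.v *)
From HB Require Import structures.
From mathcomp Require Import all_boot all_order all_algebra.
Set Implicit Arguments. Unset Strict Implicit. Unset Printing Implicit Defensive.
Import GRing.Theory.
Local Open Scope ring_scope.

(* A (simple) graph is a symmetric irreflexive relation [adj] on a finType V. *)

Definition nbhd (V : finType) (adj : rel V) (x : V) : {set V} :=
  [set y | adj x y].

Definition is_module (V : finType) (adj : rel V) (M : {set V}) : Prop :=
  forall x y, x \in M -> y \in M -> nbhd adj x :\: M = nbhd adj y :\: M.

Definition true_twins (V : finType) (adj : rel V) (x y : V) : Prop :=
  x = y \/ (is_module adj [set x; y] /\ adj x y).

Definition weight (V : finType) (adj : rel V) (G : zmodType) (l : V -> G) (v : V) : G :=
  \sum_(u | adj v u) l u.

Definition dist_antimagic_labeling (V : finType) (adj : rel V)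
    (G : finZmodType) (l : V -> G) : Prop :=
  [/\ injective l,
      (forall v, l v != 0),
      (forall g : G, g != 0 -> exists v, l v = g)
    & injective (weight adj l)].

(* Main.v *)
Require Import Defs.
From HB Require Import structures.
From mathcomp Require Import all_boot all_order all_algebra.
Import GRing.Theory.
Local Open Scope ring_scope.

Theorem proposition4p8
  (V : finType) (adj : rel V)
  (adj_sym : symmetric adj) (adj_irr : irreflexive adj)
  (t : nat) (t_pos : (0 < t)%N)
  (P : 'I_t -> {set V})
  (P_nonempty : forall i, P i != set0)
  (P_disj : forall i j, i != j -> [disjoint P i & P j])
  (P_cover : \bigcup_(i < t) P i = [set: V])
  (P_twins : forall i x y, x \in P i -> y \in P i -> true_twins adj x y)
  (G : finZmodType) (m : nat) (G_order : #|G| = m)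
  (sum_m : (\sum_(i < t) #|P i|)%N = (m - 1)%N)
  (S : 'I_t -> {set G})
  (S_disj : forall i j, i != j -> [disjoint S i & S j])
  (S_cover : \bigcup_(i < t) S i = [set~ 0])
  (S_card : forall i, #|S i| = #|P i|)
  (S_sum : forall i, \sum_(s in S i) s = 0) :
  exists l : V -> G, dist_antimagic_labeling adj l.
Proof.
pose cls (v : V) : 'I_t := odflt (Ordinal t_pos) [pick j | v \in P j].
have clsP v : v \in P (cls v).
  rewrite /cls; case: pickP => [j //|H].
  have : v \in \bigcup_(i < t) P i by rewrite P_cover inE.
  by case/bigcupP => j _ Hj; move: (H j); rewrite Hj.
have cls_eq v j : v \in P j -> cls v = j.
  move=> Hj; apply/eqP; apply: contraT => ne.
  by move: (disjointFr (P_disj _ _ ne) (clsP v)); rewrite Hj.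
have S_nz i s : s \in S i -> s != 0.
  move=> Hs; have : s \in \bigcup_(i < t) S i by apply/bigcupP; exists i.
  by rewrite S_cover !inE.
have S_eq i j s : s \in S i -> s \in S j -> i = j.
  move=> Hi Hj; apply/eqP; apply: contraT => ne.
  by move: (disjointFr (S_disj _ _ ne) Hi); rewrite Hj.
have sz i : size (enum (S i)) = size (enum (P i)) by rewrite -!cardE S_card.
pose l (v : V) : G := nth 0 (enum (S (cls v))) (index v (enum (P (cls v)))).
have idx_lt v : (index v (enum (P (cls v))) < size (enum (P (cls v))))%N.
  by rewrite index_mem mem_enum.
have lS v : l v \in S (cls v).
  by rewrite /l -mem_enum; apply: mem_nth; rewrite sz.
have l_inj : injective l.
  move=> u v Huv.
  have ec : cls u = cls v by apply: (S_eq _ _ (l v)); [rewrite -Huv|]; apply: lS.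
  move: Huv (idx_lt u) (idx_lt v); rewrite /l ec => /eqP Heq Hu Hv.
  move: Heq; rewrite nth_uniq ?sz ?enum_uniq // => /eqP E.
  apply: (index_inj u _ _ E); rewrite mem_enum; last by apply: clsP.
  by rewrite -ec; apply: clsP.
have l_img i : [set l x | x in P i] = S i.
  apply/eqP; rewrite eqEcard card_in_imset; last by move=> x y _ _; apply: l_inj.
  rewrite S_card leqnn andbT; apply/subsetP => _ /imsetP [x Hx ->].
  by rewrite -(cls_eq _ _ Hx).
have sumP i : \sum_(u in P i) l u = 0.
  rewrite -[RHS](S_sum i) -l_img big_imset //= => x y _ _; exact: l_inj.
exists l; split => //.
- by move=> v; apply: (S_nz _ _ (lS v)).
- move=> g /negPf g0.
  have : g \in \bigcup_(i < t) S i by rewrite S_cover !inE g0.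
  case/bigcupP => i _; rewrite -l_img => /imsetP [x _ ->]; by exists x.
pose N v := [set u | adj v u || (u == v)].
have closed v j u u' : u \in P j -> u' \in P j -> u \in N v -> u' \in N v.
  move=> Hu Hu'; rewrite /N !inE.
  case: (P_twins j u u' Hu Hu') => [E|[Hm Ha]]; first by rewrite E.
  case/orP => [Hvu|/eqP Euv].
  - case: (eqVneq u' v) => [->|nv]; first by rewrite orbT.
    have nuv : u != v by apply: contraTneq Hvu => ->; rewrite adj_irr.
    have : v \in nbhd adj u :\: [set u; u'].
      by rewrite !inE adj_sym Hvu andbT negb_or ![v == _]eq_sym nuv nv.
    rewrite (Hm u u') ?inE ?eqxx ?orbT // => /andP [_ H].
    by rewrite adj_sym H.
  - by rewrite -Euv Ha.
have wN v : weight adj l v = \sum_(u in N v) l u - l v.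
  rewrite (bigD1 v) /=; last by rewrite inE eqxx orbT.
  rewrite [X in X - _]addrC addrK /weight; apply: eq_big => [u|//].
  rewrite inE; case: (eqVneq u v) => [->|]; first by rewrite adj_irr.
  by rewrite orbF andbT.
have sumN v : \sum_(u in N v) l u = 0.
  rewrite (partition_big cls xpredT) //=; apply: big1 => j _.
  case: (boolP (P j \subset N v)) => sub.
  - rewrite -[RHS](sumP j); apply: eq_big => [u|//].
    apply/andP/idP => [[_ /eqP <-]//|Hu]; by rewrite (cls_eq _ _ Hu) eqxx (subsetP sub).
  - apply: big1 => u /andP [Hu /eqP E]; exfalso; move/negP: sub; apply.
    apply/subsetP => u' Hu'; apply: (closed v j u) => //; rewrite -E; exact: clsP.
move=> u v; rewrite !wN !sumN !sub0r => /oppr_inj; exact: l_inj.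
Qed.
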